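(* Consider the clique inference problem with nonnegative vertex potentials and the Potts clique potential $C(\mathbf{v})=\lambda\sum_{v\in V}n_v(\mathbf{v})^2$ with $\lambda>0$. Let $\hat{\mathbf{v}}$ be the assignment returned by the generalized $\alpha$-pass algorithm with parameter $q=2$, and let $\mathbf{v}^*$ maximize $F$. Then $F(\hat{\mathbf{v}})\ge\frac{8}{9}F(\mathbf{v}^* )$.
   Context: Clique inference problem: there are $n$ vertices $1,\dots,n$, a finite set $V$ of values, real vertex potentials $\psi_{jv}$ ($1\le j\le n$, $v\in V$), and a clique potential $C$ depending only on the counts $n_v(\mathbf{v})=|\{j:v_j=v\}|$; the objective is $F(\mathbf{v})=\sum_j\psi_{jv_j}+C(\mathbf{v})$ over $\mathbf{v}\in V^n$. Generalized $\alpha$-pass with parameter $q$: for each nonempty subset $A\subseteq V$ with $|A|\le q$ and each count $k\in\{1,\dots,n\}$, sort the vertices in decreasing order of $\max_{\alpha\in A}\psi_{i\alpha}-\max_{v\notin A}\psi_{iv}$, assign the top $k$ vertices their best value in $A$ (a value in $A$ maximizing $\psi_{iv}$) and the remaining vertices their best value not in $A$; output the best (largest $F$) of all these assignments over all $A$ and $k$. *)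

(* Defs.v *)
From HB Require Import structures.
From mathcomp Require Import all_boot all_order all_algebra all_fingroup.
Set Implicit Arguments. Unset Strict Implicit. Unset Printing Implicit Defensive.
Import Order.TTheory GRing.Theory Num.Theory.
Local Open Scope ring_scope.

Section Clique.
Variables (R : realFieldType) (n : nat) (V : finType).
Variable psi : 'I_n -> V -> R.

Definition count_val (x : 'I_n -> V) (v : V) : nat := #|[set j | x j == v]|.

Definition potts (lambda : R) (x : 'I_n -> V) : R :=
  lambda * \sum_(v : V) (count_val x v)%:R ^+ 2.

Definition objF (C : ('I_n -> V) -> R) (x : 'I_n -> V) : R :=
  \sum_(j < n) psi j (x j) + C x.

Definition bestIn (B : {set V}) (i : 'I_n) (a : V) : Prop :=
  a \in B /\ forall b, b \in B -> psi i b <= psi i a.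

(* key(j) <= key(i), where key(i) = max_{a in A} psi_{ia} - max_{b notin A} psi_{ib}.
   (If no value lies outside A, every key is +infinity and the condition is vacuous.) *)
Definition key_le (A : {set V}) (j i : 'I_n) : Prop :=
  forall a b a' b', bestIn A i a -> bestIn (~: A) i b ->
    bestIn A j a' -> bestIn (~: A) j b' ->
    psi j a' - psi j b' <= psi i a - psi i b.

Definition valid_pass (q : nat) (A : {set V}) (k : nat) : bool :=
  [&& A != set0, #|A| <= q, 0 < k & k <= n]%N.

(* x is an assignment produced by the pass (A,k) for some sorting of the
   vertices in decreasing order of key (s p = vertex at position p) and some
   choice of best values (ties broken arbitrarily) *)
Definition pass_result (A : {set V}) (k : nat) (x : 'I_n -> V) : Prop :=
  exists s : {perm 'I_n},
    (forall p p' : 'I_n, (p <= p')%N -> key_le A (s p') (s p)) /\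
    (forall p : 'I_n,
       if (p < k)%N then bestIn A (s p) (x (s p))
       else bestIn (~: A) (s p) (x (s p))).

(* vhat is an output of the generalized alpha-pass with parameter q, for some
   tie-breaking: sel A k is the assignment produced by pass (A,k) (None only if
   that pass cannot produce any assignment), and vhat is a best one of them. *)
Definition alpha_pass_output (q : nat) (C : ('I_n -> V) -> R)
    (vhat : 'I_n -> V) : Prop :=
  exists sel : {set V} -> nat -> option ('I_n -> V),
    (forall A k x, sel A k = Some x -> valid_pass q A k /\ pass_result A k x) /\
    (forall A k, valid_pass q A k -> (exists x, pass_result A k x) ->
        sel A k <> None) /\
    (exists A k, sel A k = Some vhat) /\
    (forall A k x, sel A k = Some x -> objF C x <= objF C vhat).

End Clique.

(* Main.v *)
Require Import Defs.
From HB Require Import structures.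
From mathcomp Require Import all_boot all_order all_algebra all_fingroup.
From mathcomp Require Import zify ring lra.
Import Order.TTheory GRing.Theory Num.Theory.
Local Open Scope ring_scope.
Set Implicit Arguments. Unset Strict Implicit.

Lemma sum_ltn m k : (\sum_(p < m) ((p < k)%N : nat))%N = minn m k.
Proof.
elim: m => [|m IH]; first by rewrite big_ord0 min0n.
rewrite big_ord_recr /= IH.
have [h|h] := ltnP m k; lia.
Qed.

Lemma final (R : realFieldType) (P X Y Z lam F Fs ca cb : R) : 0 <= P -> 0 <= Y -> Y <= X -> 0 <= Z -> 0 < lam ->
  0 <= ca -> 0 <= cb -> X + Y <= ca + cb -> P + lam * X^+2 <= F -> P + lam * (ca^+2 + cb^+2) <= F ->
  lam * (X + Y + Z)^+2 <= F -> Fs <= P + lam * (X^+2 + Y^+2 + Y * Z) -> 8/9 * Fs <= F.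
Proof.
move=> hP hY hYX hZ hl hca hcb hc h1 h2 h3 hs.
have hsq : (X + Y)^+2 <= 2 * (ca^+2 + cb^+2).
  have h4 : (X+Y)^+2 <= (ca+cb)^+2 by rewrite ler_sqr ?nnegrE; lra.
  have h5 : 0 <= (ca - cb)^+2 by apply: sqr_ge0.
  have -> : 2 * (ca^+2 + cb^+2) = (ca+cb)^+2 + (ca - cb)^+2 by ring.
  move: h4 h5; move: ((X+Y)^+2) ((ca+cb)^+2) ((ca - cb)^+2) => u v w; lra.
have [hc2|hc2] := lerP X (2 * Y).
  have key : 8 * (X^+2 + Y^+2 + Y * Z) <= 4 * (X+Y)^+2 + (X + Y + Z)^+2.
    have e1 : 0 <= (2*Y - Z)^+2 by apply: sqr_ge0.
    have e2 : 0 <= (X - Y) * (7*Y - 3*X) by apply: mulr_ge0; lra.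
    have e3 : 0 <= (X - Y) * Z by apply: mulr_ge0; lra.
    have -> : 4 * (X+Y)^+2 + (X + Y + Z)^+2 = 8 * (X^+2 + Y^+2 + Y * Z) + ((2*Y - Z)^+2 + (X - Y) * (7*Y - 3*X) + 2 * ((X - Y) * Z)) by ring.
    move: e1 e2 e3; move: ((2*Y - Z)^+2) ((X - Y) * (7*Y - 3*X)) ((X - Y) * Z) (8 * (X^+2 + Y^+2 + Y * Z)) => a b c d; lra.
  have k1 : 8 * (lam * (X^+2 + Y^+2 + Y * Z)) <= 4 * (lam * (X+Y)^+2) + lam * (X+Y+Z)^+2.
    have -> : 8 * (lam * (X^+2 + Y^+2 + Y * Z)) = lam * (8 * (X^+2 + Y^+2 + Y * Z)) by ring.
    have -> : 4 * (lam * (X+Y)^+2) + lam * (X+Y+Z)^+2 = lam * (4 * (X+Y)^+2 + (X+Y+Z)^+2) by ring.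
    by rewrite ler_pM2l.
  have k2 : lam * (X+Y)^+2 <= 2 * (lam * (ca^+2+cb^+2)).
    have -> : 2 * (lam * (ca^+2+cb^+2)) = lam * (2 * (ca^+2+cb^+2)) by ring.
    by rewrite ler_pM2l.
  move: h2 h3 hs k1 k2; move: (lam * (X ^+ 2 + Y ^+ 2 + Y * Z)) (lam * (ca^+2 + cb^+2)) (lam * (X + Y + Z)^+2) (lam * (X+Y)^+2) => a b c d.
  lra.
have key : 8 * (X^+2 + Y^+2 + Y * Z) <= 8 * X^+2 + (X + Y + Z)^+2.
  have e1 : 0 <= (Y - Z)^+2 by apply: sqr_ge0.
  have e2 : 0 <= (X - 2 * Y) * (X + 4*Y + 2 * Z) by apply: mulr_ge0; lra.
  have -> : 8 * X^+2 + (X + Y + Z)^+2 = 8 * (X^+2 + Y^+2 + Y * Z) + ((Y - Z)^+2 + (X - 2 * Y) * (X + 4*Y + 2 * Z)) by ring.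
  move: e1 e2; move: ((Y - Z)^+2) ((X - 2 * Y) * (X + 4*Y + 2 * Z)) (8 * (X^+2 + Y^+2 + Y * Z)) => a b d; lra.
have k1 : 8 * (lam * (X^+2 + Y^+2 + Y * Z)) <= 8 * (lam * X^+2) + lam * (X+Y+Z)^+2.
  have -> : 8 * (lam * (X^+2 + Y^+2 + Y * Z)) = lam * (8 * (X^+2 + Y^+2 + Y * Z)) by ring.
  have -> : 8 * (lam * X^+2) + lam * (X+Y+Z)^+2 = lam * (8 * X^+2 + (X+Y+Z)^+2) by ring.
  by rewrite ler_pM2l.
move: h1 h3 hs k1; move: (lam * (X ^+ 2 + Y ^+ 2 + Y * Z)) (lam * X^+2) (lam * (X + Y + Z)^+2) => a b c.
lra.
Qed.

Section S.
Variables (R : realFieldType) (n : nat) (V : finType) (psi : 'I_n -> V -> R).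

Definition bestb (B : {set V}) i a : bool :=
  (a \in B) && [forall b in B, psi i b <= psi i a].

Lemma bestbP B i a : bestb B i a -> bestIn psi B i a.
Proof.
case/andP=> h1 /forall_inP h2; by split.
Qed.

Lemma best_ex (B : {set V}) i : B != set0 -> exists a, bestb B i a.
Proof.
case/set0Pn => a0 Ha0.
case: (@arg_maxP _ _ _ a0 (mem B) (psi i) Ha0) => a Ha Hmax.
by exists a; apply/andP; split => //; apply/forall_inP => b Hb; apply: Hmax.
Qed.

Definition bst B i (a0 : V) := odflt a0 [pick a | bestb B i a].

Lemma bst_best B i a0 : B != set0 -> bestIn psi B i (bst B i a0).
Proof.
move=> hB; rewrite /bst; case: pickP => [a Ha|H] /=; first exact: bestbP.
by case: (best_ex i hB) => a Ha; rewrite H in Ha.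
Qed.

Lemma best_eq B i a a' : bestIn psi B i a -> bestIn psi B i a' -> psi i a = psi i a'.
Proof.
case=> h1 h2 [h1' h2']; apply/eqP; rewrite eq_le; rewrite h2 // h2' //.
Qed.

Lemma pass_ex A k : A != set0 -> (0 < k)%N -> (k <= n)%N ->
   ((k < n)%N -> ~:A != set0) -> exists x, pass_result psi A k x.
Proof.
move=> hA hk0 hkn hO'; case/set0Pn: (hA) => a0 _.
case: (boolP (~:A == set0)) => hO.
  exists (fun i => bst A i a0); exists 1%g; split.
    by move=> p p' _ a b a' b' _ [hb _]; move: hb; rewrite (eqP hO) inE.
  move=> p; have -> : (p < k)%N.
    have : ~~ (k < n)%N by apply/negP => /hO'; rewrite hO.
    have := ltn_ord p; lia.
  exact: bst_best.
pose key i := psi i (bst A i a0) - psi i (bst (~:A) i a0).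
pose leT := fun i j : 'I_n => key j <= key i.
have leT_tr : transitive leT by move=> j i l h1 h2; rewrite /leT; apply: le_trans h2 h1.
have leT_refl : reflexive leT by move=> i; rewrite /leT.
have leT_tot : total leT by move=> i j; rewrite /leT le_total.
pose l := sort leT (enum 'I_n).
have sz : size l = n by rewrite size_sort size_enum_ord.
have ul : uniq l by rewrite sort_uniq enum_uniq.
have srt : sorted leT l by apply: sort_sorted.
pose f := fun p : 'I_n => nth p l p.
have fE : forall p q : 'I_n, f q = nth p l q.
  by move=> p q; rewrite /f (set_nth_default p) // sz.
have finj : injective f.
  move=> p q; rewrite (fE p q) /f => /eqP; rewrite nth_uniq ?sz //.
  by move/eqP/val_inj.
pose s := perm finj.
pose x := fun i => if ((s^-1)%g i < k)%N then bst A i a0 else bst (~:A) i a0.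
exists x, s; split.
  move=> p p' hpp' a b a' b' ha hb ha' hb'.
  rewrite (best_eq ha (bst_best (s p) a0 hA)) (best_eq hb (bst_best (s p) a0 hO)).
  rewrite (best_eq ha' (bst_best (s p') a0 hA)) (best_eq hb' (bst_best (s p') a0 hO)).
  rewrite !permE (fE p p').
  have := sorted_leq_nth leT_tr leT_refl p srt.
  move=> /(_ p p'); rewrite !inE sz !ltn_ord => /(_ isT isT hpp').
  by [].
move=> p; rewrite /x permK; case: ifP => ->; exact: bst_best.
Qed.


Lemma card_sum (P : pred 'I_n) : #|[set j | P j]| = (\sum_j (P j : nat))%N.
Proof.
rewrite -sum1_card big_mkcond /=; apply: eq_bigr => j _; rewrite inE; by case: (P j).
Qed.

Lemma card_top (s : {perm 'I_n}) k : (k <= n)%N ->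
  #|[set j : 'I_n | ((s^-1)%g j < k)%N]| = k.
Proof.
move=> hk; rewrite card_sum (reindex_inj (@perm_inj _ s)) /=.
under eq_bigr do rewrite permK.
by rewrite sum_ltn; apply/minn_idPr.
Qed.

Lemma count_bound A k x : pass_result psi A k x -> (k <= n)%N ->
  (k <= #|[set j | x j \in A]|)%N.
Proof.
case=> s [_ Hb] hk; rewrite -{1}(card_top s hk); apply: subset_leq_card.
apply/subsetP => j; rewrite !inE => hj; have := Hb ((s^-1)%g j).
by rewrite permKV hj; case.
Qed.

Lemma psi_bound A k x (vstar : 'I_n -> V) : pass_result psi A k x ->
  k = #|[set j | vstar j \in A]| -> (0 < k)%N -> (k <= n)%N ->
  \sum_j psi j (vstar j) <= \sum_j psi j (x j).
Proof.
case=> s [Hs Hb] hk hk0 hkn.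
have hA : A != set0.
  apply/set0Pn; move: hk0; rewrite hk card_gt0 => /set0Pn [j]; rewrite inE => h.
  by exists (vstar j).
case: (boolP (~:A == set0)) => hO.
  apply: ler_sum => j _; have := Hb ((s^-1)%g j); rewrite permKV.
  case: ifP => _ [h1 h2].
    apply: h2; move: (in_setC (vstar j) A); rewrite (eqP hO) inE.
    by case: (vstar j \in A).
  by move: h1; rewrite (eqP hO) inE.
have hp0 : (k.-1 < n)%N by lia.
pose p0 := Ordinal hp0.
case: (best_ex (s p0) hA) => a0 /bestbP ha0.
case: (best_ex (s p0) hO) => b0 /bestbP hb0.
pose t := psi (s p0) a0 - psi (s p0) b0.
have key : forall j, psi j (vstar j) +
   ((((s^-1)%g j < k)%N : nat)%:R - ((vstar j \in A) : nat)%:R) * t <= psi j (x j).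
  move=> j; set p := (s^-1)%g j; have hj : s p = j by rewrite /p permKV.
  have := Hb p; rewrite hj.
  case: (best_ex j hA) => aj /bestbP haj.
  case: (best_ex j hO) => bj /bestbP hbj.
  case: (ltnP p k) => hp; case: (boolP (vstar j \in A)) => hv; case => hx1 hx2;
    rewrite /= ?mulr1n ?mulr0n.
  - by rewrite subrr mul0r addr0; apply: hx2.
  - have hle : (p <= p0)%N by rewrite /=; lia.
    have := Hs p p0 hle (x j) bj a0 b0; rewrite hj => /(_ (conj hx1 hx2) hbj ha0 hb0).
    have : psi j (vstar j) <= psi j bj by case: hbj => _; apply; rewrite inE.
    rewrite -/t; lra.
  - have hle : (p0 <= p)%N by rewrite /=; lia.
    have := Hs p0 p hle a0 b0 aj (x j); rewrite hj => /(_ ha0 hb0 haj (conj hx1 hx2)).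
    have : psi j (vstar j) <= psi j aj by case: haj => _; apply.
    rewrite -/t; lra.
  - by rewrite subrr mul0r addr0; apply: hx2; rewrite inE.
apply: le_trans (ler_sum _ (fun j _ => key j)).
rewrite big_split /= -mulr_suml sumrB -!natr_sum.
rewrite -!card_sum card_top // -hk subrr mul0r addr0 //.
Qed.

Lemma count_sum (x : 'I_n -> V) : \sum_(v : V) (count_val x v)%:R = n%:R :> R.
Proof.
rewrite -natr_sum; congr (_%:R).
rewrite /count_val.
under eq_bigr => v _ do rewrite (card_sum (fun j => x j == v)).
rewrite exchange_big /=.
transitivity (\sum_(j < n) 1)%N; last by rewrite sum_nat_const card_ord muln1.
apply: eq_bigr => j _.
rewrite (bigD1 (x j)) //= eqxx big1 // => v /negbTE hv; by rewrite eq_sym hv.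
Qed.

Lemma cnt_single (x : 'I_n -> V) a : #|[set j | x j \in [set a]]| = count_val x a.
Proof. by rewrite /count_val; apply: eq_card => j; rewrite !inE. Qed.

Lemma cnt_pair (x : 'I_n -> V) a b : a != b ->
  #|[set j | x j \in [set a; b]]| = (count_val x a + count_val x b)%N.
Proof.
move=> hab; rewrite /count_val (card_sum (fun j => x j \in [set a; b]))
  (card_sum (fun j => x j == a)) (card_sum (fun j => x j == b)) -big_split /=.
apply: eq_bigr => j _; rewrite !inE.
by case: eqP => [->|_] /=; rewrite ?(negbTE hab).
Qed.

Lemma card_le (P : pred 'I_n) : (#|[set j | P j]| <= n)%N.
Proof. by apply: (leq_trans (max_card _)); rewrite card_ord. Qed.

Lemma notall (A : {set V}) (vstar : 'I_n -> V) :
  (#|[set j | vstar j \in A]| < n)%N -> ~:A != set0.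
Proof.
move=> h; apply/negP => /eqP H0.
have E : [set j | vstar j \in A] = setT.
  apply/setP => j; rewrite !inE.
  have : vstar j \notin ~:A by rewrite H0 inE.
  by rewrite inE negbK.
by rewrite E cardsT card_ord ltnn in h.
Qed.

Lemma sq_le (x : 'I_n -> V) a :
  (count_val x a)%:R^+2 <= \sum_v (count_val x v)%:R^+2 :> R.
Proof.
rewrite (bigD1 a) //= lerDl; apply: sumr_ge0 => v _; apply: sqr_ge0.
Qed.

Lemma sq_le2 (x : 'I_n -> V) a b : a != b ->
  (count_val x a)%:R^+2 + (count_val x b)%:R^+2 <= \sum_v (count_val x v)%:R^+2 :> R.
Proof.
move=> hab; rewrite (bigD1 a) //= (bigD1 b) 1?eq_sym //= addrA lerDl.
apply: sumr_ge0 => v _; apply: sqr_ge0.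
Qed.

End S.


Theorem theorem7 (R : realFieldType) (n : nat) (V : finType)
    (psi : 'I_n -> V -> R) (lambda : R)
    (vhat vstar : 'I_n -> V) :
  (forall j v, 0 <= psi j v) ->
  0 < lambda ->
  alpha_pass_output psi 2 (potts lambda) vhat ->
  (forall x, objF psi (potts lambda) x <= objF psi (potts lambda) vstar) ->
  objF psi (potts lambda) vhat >= (8 / 9) * objF psi (potts lambda) vstar.
Proof.
move=> hpsi hlam [sel [H1 [H2 [[A0 [k0 Hs0]] H4]]]] hstar.
set F := objF psi (potts lambda).
change (8/9 * F vstar <= F vhat).
have hn : (0 < n)%N.
  by case: (H1 _ _ _ Hs0) => /and4P [_ _ h1 h2] _; exact: leq_trans h1 h2.
have use : forall A k, A != set0 -> (#|A| <= 2)%N -> (0 < k)%N -> (k <= n)%N ->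
    ((k < n)%N -> ~:A != set0) -> exists x, pass_result psi A k x /\ F x <= F vhat.
  move=> A k hA hA2 hk0 hkn hO.
  have hv : valid_pass n 2 A k by apply/and4P.
  have := H2 A k hv (pass_ex psi hA hk0 hkn hO).
  case E : (sel A k) => [x|] // _; exists x; split; first by case: (H1 _ _ _ E).
  exact: H4 E.
have Fx : forall x, F x = \sum_j psi j (x j) + lambda * \sum_v (count_val x v)%:R^+2 by [].
have psi0 : forall x : 'I_n -> V, 0 <= \sum_j psi j (x j) by move=> x; apply: sumr_ge0.
set P := \sum_j psi j (vstar j).
pose cnt := count_val vstar.
pose j0 := Ordinal hn.
pose v0 := vstar j0.
case: (@arg_maxnP V v0 predT cnt isT) => a _ Ha.
have hv0 : (0 < cnt v0)%N by rewrite card_gt0; apply/set0Pn; exists j0; rewrite inE.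
have hm1 : (0 < cnt a)%N := leq_trans hv0 (Ha v0 isT).
have hAa : [set a] != set0 by apply/set0Pn; exists a; rewrite inE.
have hA1 : (#|[set a]| <= 2)%N by rewrite cards1.
have [x3 [hp3 hF3]] := use [set a] n hAa hA1 hn (leqnn n) ltac:(by rewrite ltnn).
have c3 := count_bound hp3 (leqnn n); rewrite cnt_single in c3.
have L3 : lambda * (n%:R)^+2 <= F vhat.
  apply: le_trans hF3; rewrite Fx.
  have h : lambda * (n%:R)^+2 <= lambda * \sum_v (count_val x3 v)%:R^+2.
    rewrite ler_pM2l //; apply: (le_trans _ (sq_le _ x3 a)).
    by rewrite ler_sqr ?nnegrE ?ler0n // ler_nat.
  by apply: le_trans h _; rewrite lerDr psi0.
have hk1n : (cnt a <= n)%N by apply: card_le.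
have hO1 : (cnt a < n)%N -> ~:[set a] != set0.
  by move=> h; apply: (notall (vstar:=vstar)); rewrite cnt_single.
have [x1 [hp1 hF1]] := use [set a] (cnt a) hAa hA1 hm1 hk1n hO1.
have c1 := count_bound hp1 hk1n; rewrite cnt_single in c1.
have s1 := psi_bound hp1 (esym (cnt_single vstar a)) hm1 hk1n.
have L1 : P + lambda * (cnt a)%:R^+2 <= F vhat.
  apply: le_trans hF1; rewrite Fx; apply: lerD s1 _; rewrite ler_pM2l //.
  apply: (le_trans _ (sq_le _ x1 a)).
  by rewrite ler_sqr ?nnegrE ?ler0n // ler_nat.
case: (pickP (fun b => b != a)) => [b0 hb0 | hnone]; last first.
  have E : F vstar = P + lambda * (cnt a)%:R^+2.
    rewrite Fx -/P; congr (_ + _ * _); rewrite (bigD1 a) //= big1 ?addr0 // => v hv.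
    by rewrite hnone in hv.
  have h0 : 0 <= lambda * (cnt a)%:R^+2 by apply: mulr_ge0; [apply: ltW | apply: sqr_ge0].
  rewrite E; move: L1 h0 (psi0 vstar); rewrite -/P.
  move: (lambda * _) => w; lra.
case: (@arg_maxnP V b0 (fun v => v != a) cnt hb0) => b hba Hb.
have hab : a != b by rewrite eq_sym.
have hA2 : [set a; b] != set0 by apply/set0Pn; exists a; rewrite !inE eqxx.
have hA22 : (#|[set a; b]| <= 2)%N by rewrite cards2 hab.
have hk2 : (cnt a + cnt b)%N = #|[set j | vstar j \in [set a; b]]| by rewrite cnt_pair.
have hk2n : (cnt a + cnt b <= n)%N by rewrite hk2; apply: card_le.
have hk20 : (0 < cnt a + cnt b)%N by rewrite addn_gt0 hm1.
have hO2 : (cnt a + cnt b < n)%N -> ~:[set a; b] != set0.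
  by move=> h; apply: (notall (vstar:=vstar)); rewrite -hk2.
have [x2 [hp2 hF2]] := use [set a; b] _ hA2 hA22 hk20 hk2n hO2.
have c2 := count_bound hp2 hk2n; rewrite cnt_pair // in c2.
have s2 := psi_bound hp2 hk2 hk20 hk2n.
have L2 : P + lambda * ((count_val x2 a)%:R^+2 + (count_val x2 b)%:R^+2) <= F vhat.
  apply: le_trans hF2; rewrite Fx; apply: lerD s2 _; rewrite ler_pM2l //.
  exact: sq_le2.
pose Zs := \sum_(v | (v != a) && (v != b)) ((cnt v)%:R : R).
have hn_eq : (n%:R : R) = (cnt a)%:R + (cnt b)%:R + Zs.
  by rewrite -(count_sum R vstar) (bigD1 a) //= (bigD1 b) //= addrA.
have hS : \sum_v ((cnt v)%:R : R)^+2 <= (cnt a)%:R^+2 + (cnt b)%:R^+2 + (cnt b)%:R * Zs.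
  rewrite (bigD1 a) //= (bigD1 b) //= addrA lerD2l mulr_sumr.
  apply: ler_sum => v /andP [hva hvb]; rewrite expr2 ler_wpM2r // ler_nat.
  exact: Hb.
apply: (final (P:=P) (X:=(cnt a)%:R) (Y:=(cnt b)%:R) (Z:=Zs) (lam:=lambda)
   (ca:=(count_val x2 a)%:R) (cb:=(count_val x2 b)%:R)).
- exact: psi0.
- exact: ler0n.
- by rewrite ler_nat; apply: Ha.
- by apply: sumr_ge0 => v _; apply: ler0n.
- exact: hlam.
- exact: ler0n.
- exact: ler0n.
- by rewrite -!natrD ler_nat.
- exact: L1.
- exact: L2.
- by rewrite -hn_eq.
- by rewrite Fx lerD2l ler_pM2l.
Qed.
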